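(* Let $P$ be a finite graded bowtie-free poset of rank $n$ with $\hat0$ and $\hat1$ equipped with a good $\mathcal{H}_n(0)$ action $U_1,\dots,U_{n-1}$. Let $\mathfrak m'$ be a maximal chain of $P$ and $i\in[n-1]$ with $U_i(\mathfrak m')\ne\mathfrak m'$. Then there is no finite sequence $i_1,\dots,i_r$ in $[n-1]$ with $U_{i_1}U_{i_2}\cdots U_{i_r}U_i(\mathfrak m')=\mathfrak m'$.
   Context: Bowtie-free: no distinct $a,b,c,d$ with $a$ and $b$ each covering both $c$ and $d$. $\mathcal{M}(P)$ is the set of maximal chains. A good $\mathcal{H}_n(0)$ action is a family of maps $U_1,\dots,U_{n-1}:\mathcal{M}(P)\to\mathcal{M}(P)$ with: (1) $U_i(\mathfrak m)$ agrees with $\mathfrak m$ except possibly at rank $i$; (2) $U_i^2=U_i$; (3) $U_iU_j=U_jU_i$ for $|i-j|\ge2$; (4) $U_iU_{i+1}U_i=U_{i+1}U_iU_{i+1}$; (5) $\omega F_P(x)=\mathrm{ch}(\chi_P)$, where $\chi_P$ is the character of the representation of the 0-Hecke algebra $\mathcal{H}_n(0)$ on $\mathbb{C}\mathcal{M}(P)$ with $T_i$ acting as $-U_i$; $F_P(x)=\sum x_1^{\mathrm{rk}(t_0,t_1)}\cdots x_k^{\mathrm{rk}(t_{k-1},t_k)}$ over multichains $\hat0=t_0\le\cdots\le t_{k-1}<t_k=\hat1$; $L_{S,n}=\sum_{1\le i_1\le\cdots\le i_n,\ i_j<i_{j+1}\ (j\in S)}x_{i_1}\cdots x_{i_n}$;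 $\omega(L_{S,n})=L_{[n-1]\setminus S,n}$; $\mathrm{ch}$ is linear with $\mathrm{ch}(\chi_S)=L_{S,n}$ where $\chi_S$ is the character of the one-dimensional representation $T_i\mapsto-1$ ($i\in S$), $T_i\mapsto 0$ ($i\notin S$). *)

(* Defs.v *)
From HB Require Import structures.
From mathcomp Require Import all_boot all_order all_algebra.
From mathcomp Require Import mpoly.
Set Implicit Arguments. Unset Strict Implicit. Unset Printing Implicit Defensive.
Import Order.Theory GRing.Theory.

Section PosetDefs.
Variables (d : Order.disp_t) (P : finTBPOrderType d).

Definition covers (x y : P) : bool :=
  ((x < y)%O && [forall z : P, ~~ ((x < z)%O && (z < y)%O)]).

Definition bowtie_free : Prop :=
  ~ exists a b c e : P,
      [/\ uniq [:: a; b; c; e],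
          covers c a, covers e a, covers c b & covers e b].

Definition rank_function (n : nat) (rk : P -> nat) : Prop :=
  [/\ rk \bot%O = 0%N, rk \top%O = n &
      forall x y : P, covers x y -> rk y = (rk x).+1].

Definition is_chain (C : {set P}) : bool :=
  [forall x in C, forall y in C, (x >=< y)%O].

Definition is_maxchain (C : {set P}) : bool :=
  is_chain C && [forall D : {set P}, (is_chain D && (C \subset D)) ==> (D == C)].

Definition maxchain := {C : {set P} | is_maxchain C}.

Definition Uword (U : nat -> maxchain -> maxchain) (w : seq nat) : maxchain -> maxchain :=
  foldr (fun i f => U i \o f) id w.

Definition in_range (n i : nat) : bool := (0 < i < n)%N.

(* [n-1] viewed inside 'I_n : subsets S of {1,...,n-1} *)
Definition validS (n : nat) (S : {set 'I_n}) : bool := [forall j in S, 0 < (j : nat)]%N.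

Definition memS (n : nat) (S : {set 'I_n}) (i : nat) : bool := [exists j in S, (j : nat) == i].

(* value of chi_P at T_{w_1} ... T_{w_r}: trace of (-U_{w_1}) o ... o (-U_{w_r})
   acting on C M(P), i.e. (-1)^r times the number of fixed points *)
Definition chiP (U : nat -> maxchain -> maxchain) (w : seq nat) : int :=
  ((-1) ^+ size w * (#|[set m : maxchain | Uword U w m == m]|)%:Z)%R.

Definition chiS (n : nat) (S : {set 'I_n}) (w : seq nat) : int :=
  \prod_(i <- w) (if memS S i then (-1)%R else 0%R).

(* the variable x_{j+1}, truncated to N variables (x_k = 0 for k > N) *)
Definition xvar (N j : nat) : {mpoly int[N]} :=
  if insub j is Some i then 'X_i else 0%R.

Definition is_multichain (k : nat) (t : seq P) : bool :=
  [&& nth \bot%O t 0 == \bot%O, nth \bot%O t k == \top%O,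
      [forall j : 'I_k, (nth \bot%O t j <= nth \bot%O t j.+1)%O] &
      (nth \bot%O t k.-1 < nth \bot%O t k)%O].

(* F_P(x_1,...,x_N,0,0,...): multichains with k > N contribute 0 *)
Definition FP (rk : P -> nat) (N : nat) : {mpoly int[N]} :=
  \sum_(1 <= k < N.+1)
    \sum_(t : (k.+1).-tuple P | is_multichain k t)
      \prod_(j < k) xvar N j ^+ (rk (nth \bot%O t j.+1) - rk (nth \bot%O t j)).

End PosetDefs.

(* L_{S,n}(x_1,...,x_N,0,0,...) ; a sequence i_1 <= ... <= i_n with values
   in [N] is an n-tuple of 'I_N (value j stands for x_{j+1}) *)
Definition Lfun (n N : nat) (S : {set 'I_n}) : {mpoly int[N]} :=
  \sum_(t : n.-tuple 'I_N |
          sorted leq (map val t) &&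
          [forall j in S, nth 0 (map val t) (j : nat).-1 < nth 0 (map val t) j]%N)
    \prod_(i <- t) 'X_i.

Definition complS (n : nat) (S : {set 'I_n}) : {set 'I_n} :=
  [set j : 'I_n | 0 < (j : nat)]%N :\: S.

(* Main.v *)
Require Import Defs.
From HB Require Import structures.
From mathcomp Require Import all_boot all_order all_algebra.
From mathcomp Require Import mpoly.
From mathcomp Require Import zify.
Import Order.Theory GRing.Theory.

Definition Wd {T : Type} (U : nat -> T -> T) (w : seq nat) : T -> T :=
  foldr (fun i f => U i \o f) id w.

Lemma Wd_cat (T : Type) (U : nat -> T -> T) w1 w2 m :
  Wd U (w1 ++ w2) m = Wd U w1 (Wd U w2 m).
Proof. by elim: w1 => [|a w1 IH] //=; rewrite IH. Qed.

Lemma Wd_fix (T : Type) (U : nat -> T -> T) w m :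
  (forall a, a \in w -> U a m = m) -> Wd U w m = m.
Proof.
elim: w => [|a w IH] //= H.
rewrite IH ?H ?mem_head // => b Hb; apply: H; by rewrite in_cons Hb orbT.
Qed.

Lemma comm_hi (T : Type) (U : nat -> T -> T) n
  (HC : forall i j, in_range n i -> in_range n j -> (j + 2 <= i)%N ->
       forall m, U i (U j m) = U j (U i m)) t w :
  in_range n t -> all (fun a => (0 < a) && (a + 2 <= t))%N w ->
  forall m, U t (Wd U w m) = Wd U w (U t m).
Proof.
move=> Ht; elim: w => [|a w IH] //= /andP [/andP [Ha1 Ha2] Hw] m.
rewrite HC // ?IH //.
move: Ht; rewrite /in_range => /andP [_ Htn]; apply/andP; split => //.
apply: leq_ltn_trans Htn; apply: leq_trans Ha2; exact: leq_addr.
Qed.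

Lemma comm_lo (T : Type) (U : nat -> T -> T) n
  (HC : forall i j, in_range n i -> in_range n j -> (j + 2 <= i)%N ->
       forall m, U i (U j m) = U j (U i m)) j w :
  in_range n j -> all (fun a => (j + 2 <= a) && (a < n))%N w ->
  forall m, U j (Wd U w m) = Wd U w (U j m).
Proof.
move=> Hj; elim: w => [|a w IH] //= /andP [/andP [Ha1 Ha2] Hw] m.
rewrite -HC // ?IH //.
move: Hj; rewrite /in_range => /andP [Hj0 _]; apply/andP; split => //.
apply: leq_trans Ha1; apply: leq_trans Hj0 _; exact: leq_addr.
Qed.

Fixpoint E (p : pred nat) (t : nat) : seq nat :=
  match t with
  | 0 => [::]
  | t'.+1 => if p t'.+1 then E p t' ++ [:: t'.+1] else [::]
  end.

Fixpoint R (p : pred nat) (t : nat) : seq nat :=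
  match t with
  | 0 => [::]
  | t'.+1 => (if p t'.+1 then E p t'.+1 else [::]) ++ R p t'
  end.

Lemma mem_E (p : pred nat) t a : a \in E p t -> [&& (0 < a)%N, (a <= t)%N & p a].
Proof.
elim: t => [|t IH] //=.
case Hp: (p t.+1) => //; rewrite mem_cat inE => /orP [/IH|/eqP ->].
  by case/and3P => -> /leqW -> ->.
by rewrite leqnn Hp.
Qed.

Lemma E_last (p : pred nat) t : p t.+1 -> t.+1 \in E p t.+1.
Proof. by move=> /= ->; rewrite mem_cat mem_head orbT. Qed.

Lemma E_lo (p : pred nat) k t : (k <= t)%N -> ~~ p k -> all (fun a => k < a)%N (E p t).
Proof.
elim: t => [|t IH] /=.
  by rewrite leqn0 => /eqP ->.
rewrite leq_eqVlt => /orP [/eqP <-|Hk] Hp.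
  by rewrite (negbTE Hp).
case: (p t.+1) => //; rewrite all_cat IH //=.
by rewrite Hk.
Qed.

Lemma mem_R (p : pred nat) t a : (a \in R p t) = [&& (0 < a)%N, (a <= t)%N & p a].
Proof.
elim: t => [|t IH].
  by rewrite in_nil; case: a => [|[|]] //=; rewrite andbF.
rewrite (_ : R p t.+1 = (if p t.+1 then E p t.+1 else [::]) ++ R p t) // mem_cat IH; apply/idP/idP.
  case/orP.
    case: ifP => _ //; exact: mem_E.
  by case/and3P => -> /leqW -> ->.
case/and3P => Ha0; rewrite leq_eqVlt => /orP [/eqP ->|Hat] Hp.
  by rewrite Hp E_last.
by rewrite Ha0 -ltnS Hat Hp orbT.
Qed.

Lemma K1 (T : Type) (U : nat -> T -> T) n
  (HI : forall i, in_range n i -> forall m, U i (U i m) = U i m)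
  (HC : forall i j, in_range n i -> in_range n j -> (j + 2 <= i)%N ->
       forall m, U i (U j m) = U j (U i m))
  (HB : forall i, in_range n i -> in_range n i.+1 ->
       forall m, U i (U i.+1 (U i m)) = U i.+1 (U i (U i.+1 m)))
  (p : pred nat) t : forall j, (0 < j)%N -> (j <= t)%N -> (t < n)%N ->
  (forall k, (j <= k <= t)%N -> p k) -> forall m,
  U j (Wd U (E p t) m) =
  if (1 < j)%N && p j.-1 then Wd U (E p t) (U j.-1 m) else Wd U (E p t) m.
Proof.
elim: t => [|t IH] j Hj0 Hjt Htn Hrun m; first by move: Hj0 Hjt; lia.
have Hpt : p t.+1 by apply: Hrun; rewrite Hjt leqnn.
rewrite /= Hpt !Wd_cat /=.
move: Hjt; rewrite leq_eqVlt => /orP [/eqP Ej|Hjt].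
  subst j; case: t IH Hrun Hpt Htn Hj0 => [|t] IH Hrun Hpt Htn Hj0 /=.
    by rewrite HI //; rewrite /in_range; lia.
  case Hp: (p t.+1) => /=.
    rewrite !Wd_cat /= (@comm_hi _ _ _ HC); last first.
      apply/allP => a /mem_E; lia.
      rewrite /in_range; lia.
    rewrite -HB //; rewrite /in_range; lia.
  by rewrite HI //; rewrite /in_range; lia.
rewrite ltnS in Hjt.
rewrite IH //; last by move=> k Hk; apply: Hrun; lia.
  case: ifP => // /andP [Hj1 _].
  by rewrite -HC //; rewrite /in_range; lia.
lia.
Qed.

Lemma Rabs (T : Type) (U : nat -> T -> T) n
  (HI : forall i, in_range n i -> forall m, U i (U i m) = U i m)
  (HC : forall i j, in_range n i -> in_range n j -> (j + 2 <= i)%N ->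
       forall m, U i (U j m) = U j (U i m))
  (HB : forall i, in_range n i -> in_range n i.+1 ->
       forall m, U i (U i.+1 (U i m)) = U i.+1 (U i (U i.+1 m)))
  (p : pred nat) t : (t < n)%N -> forall j, (0 < j)%N -> (j <= t)%N -> p j ->
  forall m, U j (Wd U (R p t) m) = Wd U (R p t) m.
Proof.
elim: t => [|t IH] Htn j Hj0 Hjt Hpj m; first by move: Hj0 Hjt; lia.
rewrite (_ : R p t.+1 = (if p t.+1 then E p t.+1 else [::]) ++ R p t) // Wd_cat.
remember (E p t.+1) as e eqn:He.
case Hpt: (p t.+1) => /=; last first.
  have Hjt' : (j <= t)%N.
    move: Hjt; rewrite leq_eqVlt => /orP [/eqP Ej|]; last by [].
    by subst j; rewrite Hpt in Hpj.
  by apply: IH => //; lia.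
case: (boolP (has (predC p) (iota j (t.+1 - j).+1))).
  case/hasP => k; rewrite mem_iota => Hk /= Hpk.
  have Hjk : j != k by apply: contraNneq Hpk => <-.
  have Hjk' : (j < k)%N by move: Hk Hjk; rewrite neq_ltn; lia.
  rewrite (@comm_lo _ _ _ HC); last first.
    apply/allP => a Ha; rewrite He in Ha; have := @mem_E _ _ _ Ha; have Hkt : (k <= t.+1)%N by lia.
    have := allP (@E_lo p k t.+1 Hkt Hpk) a Ha.
    lia.
    rewrite /in_range; lia.
  rewrite IH //; lia.
move/hasPn => Hrun.
rewrite He (@K1 _ _ _ HI HC HB) //; last first.
  move=> k Hk; have := Hrun k; rewrite mem_iota /= => H; apply/negPn; apply: H; lia.
case: ifP => // /andP [Hj1 Hpj1].
by rewrite IH //; lia.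
Qed.

Lemma chiS_eq n (S : {set 'I_n}) w :
  chiS S w = if all (memS S) w then ((-1) ^+ size w)%R else 0%R.
Proof.
elim: w => [|a w IH]; first by rewrite /chiS big_nil.
rewrite /chiS big_cons -/(chiS S w) IH /=.
case: (memS S a) => /=; last by rewrite mul0r.
by case: (all _ _); rewrite ?mulr0 // exprS.
Qed.

Theorem mainTheorem9 (d : Order.disp_t) (P : finTBPOrderType d) (n : nat)
  (rk : P -> nat) (U : nat -> maxchain P -> maxchain P) :
  rank_function n rk ->
  bowtie_free P ->
  (* (1) U_i changes a maximal chain at most at rank i *)
  (forall i, in_range n i -> forall (m : maxchain P) (x : P),
       rk x != i -> (x \in val (U i m)) = (x \in val m)) ->
  (* (2) *)
  (forall i, in_range n i -> forall m, U i (U i m) = U i m) ->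
  (* (3) *)
  (forall i j, in_range n i -> in_range n j -> (j + 2 <= i)%N ->
       forall m, U i (U j m) = U j (U i m)) ->
  (* (4) *)
  (forall i, in_range n i -> in_range n i.+1 ->
       forall m, U i (U i.+1 (U i m)) = U i.+1 (U i (U i.+1 m))) ->
  (* (5) omega F_P = ch(chi_P) *)
  (exists (c mult : {set 'I_n} -> int),
     [/\ (* chi_P = sum_S mult_S chi_S as characters of H_n(0) *)
         (forall w : seq nat, all (in_range n) w ->
            chiP U w = (\sum_(S | validS S) mult S * chiS S w)%R),
         (* F_P = sum_S c_S L_S, in every number N of variables *)
         (forall N : nat, FP rk N = (\sum_(S | validS S) c S *: Lfun N S)%R) &
         (* omega F_P = sum_S c_S L_{[n-1]\S} equals ch(chi_P) = sum_S mult_S L_S *)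
         (forall N : nat, (\sum_(S | validS S) c S *: Lfun N (complS S))%R
                          = (\sum_(S | validS S) mult S *: Lfun N S)%R)]) ->
  forall (m' : maxchain P) (i : nat), in_range n i -> U i m' != m' ->
  forall w : seq nat, all (in_range n) w -> Uword U w (U i m') != m'.
Proof.
move=> _ _ _ HI HC HB [c [mult [Hchi _ _]]] m' i Hi Hne w Hw.
have HF : forall w, all (in_range n) w ->
    ((#|[set m | Wd U w m == m]|)%:Z =
     \sum_(S | validS S) mult S * (all (memS S) w)%:Z)%R.
  move=> w1 Hw1; have := Hchi w1 Hw1; rewrite /chiP => H.
  rewrite -(signrMK (size w1) (Posz _)).
  change (Uword U w1) with (Wd U w1) in H.
  rewrite H mulr_sumr; apply: eq_bigr => S _; rewrite chiS_eq.
  case: (all _ _) => /=; last by rewrite !mulr0.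
  by rewrite [(_ * (-1) ^+ _)%R]mulrC signrMK mulr1.
apply/negP => /eqP Hfix.
set v := w ++ [:: i].
have Hv : all (in_range n) v by rewrite all_cat Hw /= Hi.
have Hfixv : Wd U v m' = m' by rewrite Wd_cat; exact: Hfix.
pose p : pred nat := fun a => a \in v.
pose v0 := R p n.-1.
have Hn : (0 < n)%N by move: Hi; rewrite /in_range; lia.
have Hmem : forall a, (a \in v0) = (a \in v).
  move=> a; rewrite mem_R; apply/idP/idP; first by case/and3P.
  move=> Ha; have := allP Hv a Ha; rewrite /in_range => Har.
  rewrite /p Ha andbT; lia.
have Hv0 : all (in_range n) v0 by apply/allP => a; rewrite Hmem; exact: allP Hv a.
have Hcard : #|[set m | Wd U v0 m == m]| = #|[set m | Wd U v m == m]|.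
  apply/eqP; rewrite -eqz_nat; apply/eqP.
  by rewrite HF // HF //; apply: eq_bigr => S _; rewrite (eq_all_r Hmem).
have Habs : forall a m, a \in v -> U a (Wd U v0 m) = Wd U v0 m.
  move=> a m Ha; have := allP Hv a Ha; rewrite /in_range => Har.
  apply: (@Rabs _ _ _ HI HC HB); try lia; exact: Ha.
have Hsub : [set m | Wd U v0 m == m] \subset [set m | Wd U v m == m].
  apply/subsetP => m; rewrite !inE => /eqP Hm; apply/eqP; apply: Wd_fix => a Ha.
  by rewrite -Hm Habs.
move/(subset_cardP Hcard): Hsub => HYX.
have := HYX m'; rewrite !inE Hfixv eqxx => /eqP Hm0.
move/negP: Hne; apply; apply/eqP.
by rewrite -Hm0 Habs // mem_cat mem_head orbT.
Qed.
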